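(* Let $\mathcal{C}_1,\mathcal{C}_2$ be symmetric monoidal anti-involutive categories with duals, each equipped with a dual functor with its canonical anti-involutive structure. Let $(F,\phi)\colon\mathcal{C}_1\to\mathcal{C}_2$ be a symmetric monoidal anti-involutive functor, and denote by $\zeta_x\colon F(x^* )\to F(x)^*$ the canonical isomorphism expressing that $F$ preserves duals. Then $\zeta$ is a monoidal anti-involutive natural isomorphism between the symmetric monoidal anti-involutive functors $F\circ(\cdot)^*$ and $(\cdot)^*\circ F$ from $\mathcal{C}_1$ to $\mathcal{C}_2^{\mathrm{op}}$.
   Context: Symmetric monoidal anti-involutive category $(\mathcal{C},d,\eta)$: symmetric monoidal category, symmetric monoidal functor $d\colon\mathcal{C}\to\mathcal{C}^{\mathrm{op}}$, monoidal natural isomorphism $\eta\colon\mathrm{id}\Rightarrow d^2$ with $d(\eta_x)\circ\eta_{dx}=\mathrm{id}$; $\mathcal{C}^{\mathrm{op}}$ gets the anti-involution $d$ with $\eta^{-1}$. A symmetric monoidal anti-involutive functor $(F,\phi)$: symmetric monoidal functor with monoidal natural isomorphism $\phi\colon F\circ d\Rightarrow d\circ F$ with $\phi_{dx}\circ F(\eta_x)=d(\phi_x)\circ\eta_{F(x)}$; composites of such are again such in the evident way. An anti-involutive natural transformation $u\colon(F,\phi)\Rightarrow(G,\psi)$ satisfies $\phi_x=d(u_x)\circ\psi_x\circ u_{dx}$. A dual functor comes from choosing duals $(x^*,\mathrm{ev}_x,\mathrm{coev}_x)$; its canonical anti-involutive structure is the isomorphism $d(x^* )\cong(dx)^*$ given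 by uniqueness of duals (both are duals of $dx$). For a symmetric monoidal functor $F$, $F(x^* )$ is a dual of $F(x)$ via the image of the duality data, and $\zeta_x$ is the unique isomorphism to the chosen dual $F(x)^*$ compatible with evaluations and coevaluations. *)

(* Defs.v *)
(* Morphism equality is Leibniz equality.
   Design: "raw" structures carry the data only; the axioms are separate Prop
   records.  This lets opposite categories, opposite functors and composites be
   defined purely on data. *)

Record RawSMC := {
  ob : Type;
  hom : ob -> ob -> Type;
  idm : forall x, hom x x;
  comp : forall x y z, hom y z -> hom x y -> hom x z;
  tens : ob -> ob -> ob;
  tensm : forall x x' y y', hom x x' -> hom y y' -> hom (tens x y) (tens x' y');
  tunit : ob;
  assoc : forall x y z, hom (tens (tens x y) z) (tens x (tens y z));
  assoc_inv : forall x y z, hom (tens x (tens y z)) (tens (tens x y) z);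
  lunit : forall x, hom (tens tunit x) x;
  lunit_inv : forall x, hom x (tens tunit x);
  runit : forall x, hom (tens x tunit) x;
  runit_inv : forall x, hom x (tens x tunit);
  braid : forall x y, hom (tens x y) (tens y x)
}.

Arguments comp _ {x y z} g f.
Arguments tensm _ {x x' y y'} f g.

Definition is_iso (C : RawSMC) (x y : ob C) (f : hom C x y) (g : hom C y x) : Prop :=
  comp C g f = idm C x /\ comp C f g = idm C y.
Arguments is_iso C {x y} f g.

Record SMCLaws (C : RawSMC) : Prop := {
  comp_idl : forall x y (f : hom C x y), comp C (idm C y) f = f;
  comp_idr : forall x y (f : hom C x y), comp C f (idm C x) = f;
  comp_assoc : forall w x y z (h : hom C y z) (g : hom C x y) (f : hom C w x),
      comp C h (comp C g f) = comp C (comp C h g) f;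
  tensm_id : forall x y, tensm C (idm C x) (idm C y) = idm C (tens C x y);
  tensm_comp : forall x x' x'' y y' y'' (f : hom C x x') (f' : hom C x' x'')
      (g : hom C y y') (g' : hom C y' y''),
      tensm C (comp C f' f) (comp C g' g) = comp C (tensm C f' g') (tensm C f g);
  assoc_iso : forall x y z, is_iso C (assoc C x y z) (assoc_inv C x y z);
  lunit_iso : forall x, is_iso C (lunit C x) (lunit_inv C x);
  runit_iso : forall x, is_iso C (runit C x) (runit_inv C x);
  assoc_nat : forall x x' y y' z z' (f : hom C x x') (g : hom C y y') (h : hom C z z'),
      comp C (assoc C x' y' z') (tensm C (tensm C f g) h)
      = comp C (tensm C f (tensm C g h)) (assoc C x y z);
  lunit_nat : forall x y (f : hom C x y),
      comp C (lunit C y) (tensm C (idm C (tunit C)) f) = comp C f (lunit C x);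
  runit_nat : forall x y (f : hom C x y),
      comp C (runit C y) (tensm C f (idm C (tunit C))) = comp C f (runit C x);
  braid_nat : forall x x' y y' (f : hom C x x') (g : hom C y y'),
      comp C (braid C x' y') (tensm C f g) = comp C (tensm C g f) (braid C x y);
  pentagon : forall w x y z,
      comp C (assoc C w x (tens C y z)) (assoc C (tens C w x) y z)
      = comp C (tensm C (idm C w) (assoc C x y z))
          (comp C (assoc C w (tens C x y) z) (tensm C (assoc C w x y) (idm C z)));
  triangle : forall x y,
      comp C (tensm C (idm C x) (lunit C y)) (assoc C x (tunit C) y)
      = tensm C (runit C x) (idm C y);
  hexagon : forall x y z,
      comp C (assoc C y z x) (comp C (braid C x (tens C y z)) (assoc C x y z))
      = comp C (tensm C (idm C y) (braid C x z))
          (comp C (assoc C y x z) (tensm C (braid C x y) (idm C z)));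
  braid_invol : forall x y, comp C (braid C y x) (braid C x y) = idm C (tens C x y)
}.

Definition op (C : RawSMC) : RawSMC := {|
  ob := ob C;
  hom := fun x y => hom C y x;
  idm := fun x => idm C x;
  comp := fun x y z g f => comp C f g;
  tens := tens C;
  tensm := fun x x' y y' f g => tensm C f g;
  tunit := tunit C;
  assoc := fun x y z => assoc_inv C x y z;
  assoc_inv := fun x y z => assoc C x y z;
  lunit := fun x => lunit_inv C x;
  lunit_inv := fun x => lunit C x;
  runit := fun x => runit_inv C x;
  runit_inv := fun x => runit C x;
  braid := fun x y => braid C y x
|}.

Record FunData (C D : RawSMC) := {
  fob : ob C -> ob D;
  fmap : forall x y, hom C x y -> hom D (fob x) (fob y);
  fmu : forall x y, hom D (tens D (fob x) (fob y)) (fob (tens C x y));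
  fmu_inv : forall x y, hom D (fob (tens C x y)) (tens D (fob x) (fob y));
  feps : hom D (tunit D) (fob (tunit C));
  feps_inv : hom D (fob (tunit C)) (tunit D)
}.
Arguments fob {C D} f x.
Arguments fmap {C D} f {x y} _.
Arguments fmu {C D} f x y.
Arguments fmu_inv {C D} f x y.
Arguments feps {C D} f.
Arguments feps_inv {C D} f.

Record SMFunctorLaws (C D : RawSMC) (F : FunData C D) : Prop := {
  fmap_id : forall x, fmap F (idm C x) = idm D (fob F x);
  fmap_comp : forall x y z (g : hom C y z) (f : hom C x y),
      fmap F (comp C g f) = comp D (fmap F g) (fmap F f);
  fmu_iso : forall x y, is_iso D (fmu F x y) (fmu_inv F x y);
  feps_iso : is_iso D (feps F) (feps_inv F);
  fmu_nat : forall x x' y y' (f : hom C x x') (g : hom C y y'),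
      comp D (fmap F (tensm C f g)) (fmu F x y)
      = comp D (fmu F x' y') (tensm D (fmap F f) (fmap F g));
  fmu_assoc : forall x y z,
      comp D (fmap F (assoc C x y z))
        (comp D (fmu F (tens C x y) z) (tensm D (fmu F x y) (idm D (fob F z))))
      = comp D (fmu F x (tens C y z))
          (comp D (tensm D (idm D (fob F x)) (fmu F y z))
             (assoc D (fob F x) (fob F y) (fob F z)));
  fmu_lunit : forall x,
      comp D (fmap F (lunit C x))
        (comp D (fmu F (tunit C) x) (tensm D (feps F) (idm D (fob F x))))
      = lunit D (fob F x);
  fmu_runit : forall x,
      comp D (fmap F (runit C x))
        (comp D (fmu F x (tunit C)) (tensm D (idm D (fob F x)) (feps F)))
      = runit D (fob F x);
  fmu_braid : forall x y,
      comp D (fmap F (braid C x y)) (fmu F x y)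
      = comp D (fmu F y x) (braid D (fob F x) (fob F y))
}.
Arguments SMFunctorLaws {C D} F.

Definition fop (C D : RawSMC) (F : FunData C D) : FunData (op C) (op D) :=
  Build_FunData (op C) (op D)
    (fob F)
    (fun x y (f : hom (op C) x y) => @fmap C D F y x f)
    (fun x y => fmu_inv F x y)
    (fun x y => fmu F x y)
    (feps_inv F)
    (feps F).
Arguments fop {C D} F.

Definition fcomp (C D E : RawSMC) (G : FunData D E) (F : FunData C D) : FunData C E :=
  Build_FunData C E
    (fun x => fob G (fob F x))
    (fun x y f => @fmap D E G _ _ (@fmap C D F x y f))
    (fun x y => comp E (fmap G (fmu F x y)) (fmu G (fob F x) (fob F y)))
    (fun x y => comp E (fmu_inv G (fob F x) (fob F y)) (fmap G (fmu_inv F x y)))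
    (comp E (fmap G (feps F)) (feps G))
    (comp E (feps_inv G) (fmap G (feps_inv F))).
Arguments fcomp {C D E} G F.

Definition idopop (C : RawSMC) : FunData C (op (op C)) :=
  Build_FunData C (op (op C))
    (fun x => x)
    (fun x y (f : hom C x y) => f)
    (fun x y => idm C (tens C x y))
    (fun x y => idm C (tens C x y))
    (idm C (tunit C))
    (idm C (tunit C)).

Definition NatData (C D : RawSMC) (F G : FunData C D) :=
  forall x : ob C, hom D (fob F x) (fob G x).
Arguments NatData {C D} F G.

Record MonNatIsoLaws (C D : RawSMC) (F G : FunData C D) (u : NatData F G) : Prop := {
  nat_natural : forall x y (f : hom C x y),
      comp D (u y) (fmap F f) = comp D (fmap G f) (u x);
  nat_mu : forall x y,
      comp D (u (tens C x y)) (fmu F x y) = comp D (fmu G x y) (tensm D (u x) (u y));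
  nat_eps : comp D (u (tunit C)) (feps F) = feps G;
  nat_iso : forall x, exists v : hom D (fob G x) (fob F x), is_iso D (u x) v
}.
Arguments MonNatIsoLaws {C D F G} u.

Record AntiInv (C : RawSMC) := {
  ai_d : FunData C (op C);
  ai_eta : NatData (idopop C) (fcomp (fop ai_d) ai_d);       (* eta_x : x -> d(d x) in C *)
  ai_eta_inv : forall x : ob C, hom C (fob ai_d (fob ai_d x)) x
}.
Arguments ai_d {C} a.
Arguments ai_eta {C} a x.
Arguments ai_eta_inv {C} a x.

Record AntiInvLaws (C : RawSMC) (A : AntiInv C) : Prop := {
  ai_d_sm : SMFunctorLaws (ai_d A);
  ai_eta_mon : MonNatIsoLaws (ai_eta A);
  ai_eta_inv_iso : forall x, is_iso C (ai_eta A x) (ai_eta_inv A x);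
  ai_invol : forall x,
      comp C (fmap (ai_d A) (ai_eta A x)) (ai_eta A (fob (ai_d A) x))
      = idm C (fob (ai_d A) x)
}.
Arguments AntiInvLaws {C} A.

Definition aiop (C : RawSMC) (A : AntiInv C) : AntiInv (op C) :=
  Build_AntiInv (op C)
    (fop (ai_d A))
    (fun x => ai_eta_inv A x)
    (fun x => ai_eta A x).
Arguments aiop {C} A.

(* phi_x : F(d x) -> d(F x), a morphism of D (as in the paper's coherence
   condition phi_{dx} o F(eta_x) = d(phi_x) o eta_{F x}). *)
Record AIFun (C D : RawSMC) (A : AntiInv C) (B : AntiInv D) := {
  aif_F : FunData C D;
  aif_phi : NatData (fcomp (ai_d B) aif_F) (fcomp (fop aif_F) (ai_d A));
  aif_phi_inv : forall x, hom D (fob (ai_d B) (fob aif_F x)) (fob aif_F (fob (ai_d A) x))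
}.
Arguments AIFun {C D} A B.
Arguments aif_F {C D A B} a.
Arguments aif_phi {C D A B} a x.
Arguments aif_phi_inv {C D A B} a x.

Record AIFunLaws (C D : RawSMC) (A : AntiInv C) (B : AntiInv D) (F : AIFun A B) : Prop := {
  aif_sm : SMFunctorLaws (aif_F F);
  aif_phi_mon : MonNatIsoLaws (aif_phi F);
  aif_phi_inv_iso : forall x, is_iso D (aif_phi F x) (aif_phi_inv F x);
  aif_coh : forall x,
      comp D (aif_phi F (fob (ai_d A) x)) (fmap (aif_F F) (ai_eta A x))
      = comp D (fmap (ai_d B) (aif_phi F x)) (ai_eta B (fob (aif_F F) x))
}.
Arguments AIFunLaws {C D A B} F.

Record AINatLaws (C D : RawSMC) (A : AntiInv C) (B : AntiInv D) (F G : AIFun A B)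
    (u : NatData (aif_F F) (aif_F G)) : Prop := {
  ain_mon : MonNatIsoLaws u;
  ain_coh : forall x,
      aif_phi F x
      = comp D (fmap (ai_d B) (u x)) (comp D (aif_phi G x) (u (fob (ai_d A) x)))
}.
Arguments AINatLaws {C D A B} F G u.

Definition aifcomp (C D E : RawSMC) (A : AntiInv C) (B : AntiInv D) (Bc : AntiInv E)
    (G : AIFun B Bc) (F : AIFun A B) : AIFun A Bc :=
  @Build_AIFun C E A Bc
    (fcomp (aif_F G) (aif_F F))
    (fun x => comp E (aif_phi G (fob (aif_F F) x)) (fmap (aif_F G) (aif_phi F x)))
    (fun x => comp E (fmap (aif_F G) (aif_phi_inv F x)) (aif_phi_inv G (fob (aif_F F) x))).
Arguments aifcomp {C D E A B Bc} G F.

Definition fopAIF (C D : RawSMC) (A : AntiInv C) (B : AntiInv D) (F : AIFun A B)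
    : AIFun (aiop A) (aiop B) :=
  @Build_AIFun (op C) (op D) (aiop A) (aiop B)
    (fop (aif_F F))
    (fun x => aif_phi_inv F x)
    (fun x => aif_phi F x).
Arguments fopAIF {C D A B} F.

Definition is_dual (C : RawSMC) (x xd : ob C)
    (ev : hom C (tens C xd x) (tunit C)) (coev : hom C (tunit C) (tens C x xd)) : Prop :=
  comp C (runit C x) (comp C (tensm C (idm C x) ev)
     (comp C (assoc C x xd x) (comp C (tensm C coev (idm C x)) (lunit_inv C x))))
  = idm C x /\
  comp C (lunit C xd) (comp C (tensm C ev (idm C xd))
     (comp C (assoc_inv C xd x xd) (comp C (tensm C (idm C xd) coev) (runit_inv C xd))))
  = idm C xd.
Arguments is_dual C {x xd} ev coev.

Record Duals (C : RawSMC) := {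
  dob : ob C -> ob C;
  dev : forall x, hom C (tens C (dob x) x) (tunit C);
  dcoev : forall x, hom C (tunit C) (tens C x (dob x))
}.
Arguments dob {C} d x.
Arguments dev {C} d x.
Arguments dcoev {C} d x.

Definition DualsLaws (C : RawSMC) (Dl : Duals C) : Prop :=
  forall x, is_dual C (dev Dl x) (dcoev Dl x).
Arguments DualsLaws {C} Dl.

(* canonical map a -> b between two duals of x (uniqueness of duals):
   a = a(x)I -> a(x)(x(x)b) -> (a(x)x)(x)b -> I(x)b = b *)
Definition dual_iso (C : RawSMC) (x a b : ob C)
    (eva : hom C (tens C a x) (tunit C)) (coevb : hom C (tunit C) (tens C x b)) : hom C a b :=
  comp C (lunit C b) (comp C (tensm C eva (idm C b))
    (comp C (assoc_inv C a x b) (comp C (tensm C (idm C a) coevb) (runit_inv C a)))).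
Arguments dual_iso C {x a b} eva coevb.

Definition dual_mor (C : RawSMC) (Dl : Duals C) (x y : ob C) (f : hom C x y)
    : hom C (dob Dl y) (dob Dl x) :=
  dual_iso C (comp C (dev Dl y) (tensm C (idm C (dob Dl y)) f)) (dcoev Dl x).
Arguments dual_mor {C} Dl {x y} f.

Definition shuffle (C : RawSMC) (a b c d : ob C)
    : hom C (tens C (tens C a b) (tens C c d)) (tens C (tens C a c) (tens C b d)) :=
  comp C (assoc_inv C a c (tens C b d))
   (comp C (tensm C (idm C a) (assoc C c b d))
    (comp C (tensm C (idm C a) (tensm C (braid C b c) (idm C d)))
     (comp C (tensm C (idm C a) (assoc_inv C b c d)) (assoc C a b (tens C c d))))).

Definition ev_par (C : RawSMC) (Dl : Duals C) (x y : ob C)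
    : hom C (tens C (tens C (dob Dl x) (dob Dl y)) (tens C x y)) (tunit C) :=
  comp C (lunit C (tunit C))
    (comp C (tensm C (dev Dl x) (dev Dl y)) (shuffle C (dob Dl x) (dob Dl y) x y)).
Definition coev_par (C : RawSMC) (Dl : Duals C) (x y : ob C)
    : hom C (tunit C) (tens C (tens C x y) (tens C (dob Dl x) (dob Dl y))) :=
  comp C (shuffle C x (dob Dl x) y (dob Dl y))
    (comp C (tensm C (dcoev Dl x) (dcoev Dl y)) (lunit_inv C (tunit C))).
Arguments ev_par {C} Dl x y.
Arguments coev_par {C} Dl x y.

Definition dualF (C : RawSMC) (Dl : Duals C) : FunData C (op C) :=
  Build_FunData C (op C)
    (dob Dl)
    (fun x y (f : hom C x y) => dual_mor Dl f)
    (fun x y => dual_iso C (dev Dl (tens C x y)) (coev_par Dl x y))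
    (fun x y => dual_iso C (ev_par Dl x y) (dcoev Dl (tens C x y)))
    (dual_iso C (dev Dl (tunit C)) (lunit_inv C (tunit C)))
    (dual_iso C (lunit C (tunit C)) (dcoev Dl (tunit C))).
Arguments dualF {C} Dl.

(* d(x^dual) as a dual of d x, transported along the monoidal functor d *)
Definition ev_d (C : RawSMC) (A : AntiInv C) (Dl : Duals C) (x : ob C)
    : hom C (tens C (fob (ai_d A) (dob Dl x)) (fob (ai_d A) x)) (tunit C) :=
  comp C (feps (ai_d A))
    (comp C (fmap (ai_d A) (dcoev Dl x))
      (comp C (fmu_inv (ai_d A) x (dob Dl x))
        (braid C (fob (ai_d A) (dob Dl x)) (fob (ai_d A) x)))).
Definition coev_d (C : RawSMC) (A : AntiInv C) (Dl : Duals C) (x : ob C)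
    : hom C (tunit C) (tens C (fob (ai_d A) x) (fob (ai_d A) (dob Dl x))) :=
  comp C (braid C (fob (ai_d A) (dob Dl x)) (fob (ai_d A) x))
    (comp C (fmu (ai_d A) (dob Dl x) x)
      (comp C (fmap (ai_d A) (dev Dl x)) (feps_inv (ai_d A)))).
Arguments ev_d {C} A Dl x.
Arguments coev_d {C} A Dl x.

(* the dual functor with its canonical anti-involutive structure
   d(x^dual) ~ (d x)^dual (uniqueness of duals) *)
Definition dualAIF (C : RawSMC) (A : AntiInv C) (Dl : Duals C) : AIFun A (aiop A) :=
  @Build_AIFun C (op C) A (aiop A)
    (dualF Dl)
    (fun x => dual_iso C (ev_d A Dl x) (dcoev Dl (fob (ai_d A) x)))
    (fun x => dual_iso C (dev Dl (fob (ai_d A) x)) (coev_d A Dl x)).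
Arguments dualAIF {C} A Dl.

(* zeta_x : F(x^dual) -> F(x)^dual, the unique iso compatible with (co)evaluations,
   where F(x^dual) is a dual of F(x) via the image of the duality data *)
Definition evF (C1 C2 : RawSMC) (D1 : Duals C1) (F : FunData C1 C2) (x : ob C1)
    : hom C2 (tens C2 (fob F (dob D1 x)) (fob F x)) (tunit C2) :=
  comp C2 (feps_inv F) (comp C2 (fmap F (dev D1 x)) (fmu F (dob D1 x) x)).
Arguments evF {C1 C2} D1 F x.

Definition zeta (C1 C2 : RawSMC) (D1 : Duals C1) (D2 : Duals C2) (F : FunData C1 C2)
    : NatData (fcomp (dualF D2) F) (fcomp (fop F) (dualF D1)) :=
  fun x => dual_iso C2 (evF D1 F x) (dcoev D2 (fob F x)).
Arguments zeta {C1 C2} D1 D2 F.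

(* Main.v *)
Require Import Defs.
From Corelib Require Import ssreflect.

Existing Class SMCLaws.

Notation "g ∘ f" := (comp _ g f) (at level 40, left associativity).
Notation "f ⊗ g" := (tensm _ f g) (at level 35).

Section S.
Context {C : RawSMC}.
Context {HC : SMCLaws C}.
Notation "1_ x" := (idm C x) (at level 9, x at level 9).
Notation tns := (tens C).
Notation I := (tunit C).
Notation α := (assoc C).
Notation α' := (assoc_inv C).
Notation λ := (lunit C).
Notation λ' := (lunit_inv C).
Notation ρ := (runit C).
Notation ρ' := (runit_inv C).
Notation β := (braid C).

Lemma cA w x y z (h : hom C y z) (g : hom C x y) (f : hom C w x) : h ∘ (g ∘ f) = h ∘ g ∘ f.
Proof. apply comp_assoc; exact HC. Qed.

Lemma tl {w x y z} {g : hom C y z} {f : hom C x y} {k : hom C x z} (e : g ∘ f = k) (h : hom C w x) :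
  g ∘ (f ∘ h) = k ∘ h.
Proof. rewrite cA e. reflexivity. Qed.

Lemma tl3 {w x y z} {g : hom C y z} {f : hom C x y} {d : hom C w x} {k : hom C w z}
  (e : g ∘ (f ∘ d) = k) u (h : hom C u w) : g ∘ (f ∘ (d ∘ h)) = k ∘ h.
Proof. rewrite -e !cA. reflexivity. Qed.
Lemma tl4 {v w x y z t} {g : hom C y z} {f : hom C x y} {d : hom C w x} {c : hom C v w} {k : hom C v z}
  (e : g ∘ (f ∘ (d ∘ c)) = k) (h : hom C t v) : g ∘ (f ∘ (d ∘ (c ∘ h))) = k ∘ h.
Proof. rewrite -e !cA. reflexivity. Qed.
Lemma tl5 {u v w x y z t} {g : hom C y z} {f : hom C x y} {d : hom C w x} {c : hom C v w} {b : hom C u v} {k : hom C u z}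
  (e : g ∘ (f ∘ (d ∘ (c ∘ b))) = k) (h : hom C t u) : g ∘ (f ∘ (d ∘ (c ∘ (b ∘ h)))) = k ∘ h.
Proof. rewrite -e !cA. reflexivity. Qed.
Lemma tl6 {s u v w x y z t} {g : hom C y z} {f : hom C x y} {d : hom C w x} {c : hom C v w} {b : hom C u v} {a : hom C s u} {k : hom C s z}
  (e : g ∘ (f ∘ (d ∘ (c ∘ (b ∘ a)))) = k) (h : hom C t s) : g ∘ (f ∘ (d ∘ (c ∘ (b ∘ (a ∘ h))))) = k ∘ h.
Proof. rewrite -e !cA. reflexivity. Qed.

Lemma il x y (f : hom C x y) : 1_ y ∘ f = f. Proof. apply comp_idl; exact HC. Qed.
Lemma ir x y (f : hom C x y) : f ∘ 1_ x = f. Proof. apply comp_idr; exact HC. Qed.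
Lemma t11 x y : 1_ x ⊗ 1_ y = 1_ (tns x y). Proof. apply tensm_id; exact HC. Qed.
Lemma tc x x' x'' y y' y'' (f : hom C x x') (f' : hom C x' x'') (g : hom C y y') (g' : hom C y' y'') :
  (f' ⊗ g') ∘ (f ⊗ g) = (f' ∘ f) ⊗ (g' ∘ g).
Proof. symmetry; apply tensm_comp; exact HC. Qed.

Lemma tsplit x x' y y' (f : hom C x x') (g : hom C y y') : f ⊗ g = (f ⊗ 1_ y') ∘ (1_ x ⊗ g).
Proof. rewrite tc il ir. reflexivity. Qed.
Lemma tsplit' x x' y y' (f : hom C x x') (g : hom C y y') : f ⊗ g = (1_ x' ⊗ g) ∘ (f ⊗ 1_ y).
Proof. rewrite tc il ir. reflexivity. Qed.
Lemma xch x x' y y' (f : hom C x x') (g : hom C y y') : (f ⊗ 1_ y') ∘ (1_ x ⊗ g) = (1_ x' ⊗ g) ∘ (f ⊗ 1_ y).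
Proof. rewrite -tsplit -tsplit'. reflexivity. Qed.
Lemma xch' x x' y y' (f : hom C x x') (g : hom C y y') : (1_ x' ⊗ g) ∘ (f ⊗ 1_ y) = (f ⊗ 1_ y') ∘ (1_ x ⊗ g).
Proof. symmetry. apply xch. Qed.
Lemma wl x y z (f : hom C y z) (g : hom C x y) w : (1_ w ⊗ f) ∘ (1_ w ⊗ g) = 1_ w ⊗ (f ∘ g).
Proof. rewrite tc il. reflexivity. Qed.
Lemma wr x y z (f : hom C y z) (g : hom C x y) w : (f ⊗ 1_ w) ∘ (g ⊗ 1_ w) = (f ∘ g) ⊗ 1_ w.
Proof. rewrite tc il. reflexivity. Qed.
Lemma wl1 x w : 1_ w ⊗ 1_ x = 1_ (tns w x). Proof. apply t11. Qed.

Lemma aa' x y z : α x y z ∘ α' x y z = 1_ _. Proof. apply (assoc_iso C HC). Qed.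
Lemma a'a x y z : α' x y z ∘ α x y z = 1_ _. Proof. apply (assoc_iso C HC). Qed.
Lemma ll' x : λ x ∘ λ' x = 1_ _. Proof. apply (lunit_iso C HC). Qed.
Lemma l'l x : λ' x ∘ λ x = 1_ _. Proof. apply (lunit_iso C HC). Qed.
Lemma rr' x : ρ x ∘ ρ' x = 1_ _. Proof. apply (runit_iso C HC). Qed.
Lemma r'r x : ρ' x ∘ ρ x = 1_ _. Proof. apply (runit_iso C HC). Qed.
Lemma bb x y : β y x ∘ β x y = 1_ _. Proof. apply (braid_invol C HC). Qed.

Lemma iso_mono x y (f : hom C x y) (g : hom C y x) z (u v : hom C z x) :
  g ∘ f = 1_ x -> f ∘ u = f ∘ v -> u = v.
Proof. intros H E. rewrite -(il _ _ u) -(il _ _ v) -H -!cA E. reflexivity. Qed.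
Lemma iso_epi x y (f : hom C x y) (g : hom C y x) z (u v : hom C y z) :
  f ∘ g = 1_ y -> u ∘ f = v ∘ f -> u = v.
Proof. intros H E. rewrite -(ir _ _ u) -(ir _ _ v) -H !cA E. reflexivity. Qed.

Lemma aN x x' y y' z z' (f : hom C x x') (g : hom C y y') (h : hom C z z') :
  α x' y' z' ∘ ((f ⊗ g) ⊗ h) = (f ⊗ (g ⊗ h)) ∘ α x y z.
Proof. apply assoc_nat; exact HC. Qed.
Lemma aN1 x x' y z (f : hom C x x') :
  α x' y z ∘ ((f ⊗ 1_ y) ⊗ 1_ z) = (f ⊗ 1_ (tns y z)) ∘ α x y z.
Proof. rewrite aN t11. reflexivity. Qed.
Lemma aN2 x y y' z (g : hom C y y') :
  α x y' z ∘ ((1_ x ⊗ g) ⊗ 1_ z) = (1_ x ⊗ (g ⊗ 1_ z)) ∘ α x y z.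
Proof. rewrite aN. reflexivity. Qed.
Lemma aN3 x y z z' (h : hom C z z') :
  α x y z' ∘ (1_ (tns x y) ⊗ h) = (1_ x ⊗ (1_ y ⊗ h)) ∘ α x y z.
Proof. rewrite -t11 aN. reflexivity. Qed.
Lemma a'N x x' y y' z z' (f : hom C x x') (g : hom C y y') (h : hom C z z') :
  α' x' y' z' ∘ (f ⊗ (g ⊗ h)) = ((f ⊗ g) ⊗ h) ∘ α' x y z.
Proof.
  apply (iso_mono _ _ (α x' y' z') (α' x' y' z')); first by apply a'a.
  rewrite !cA aa' il aN -cA aa' ir. reflexivity.
Qed.
Lemma a'N1 x x' y z (f : hom C x x') :
  α' x' y z ∘ (f ⊗ 1_ (tns y z)) = ((f ⊗ 1_ y) ⊗ 1_ z) ∘ α' x y z.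
Proof. rewrite -t11 a'N. reflexivity. Qed.
Lemma a'N2 x y y' z (g : hom C y y') :
  α' x y' z ∘ (1_ x ⊗ (g ⊗ 1_ z)) = ((1_ x ⊗ g) ⊗ 1_ z) ∘ α' x y z.
Proof. rewrite a'N. reflexivity. Qed.
Lemma a'N3 x y z z' (h : hom C z z') :
  α' x y z' ∘ (1_ x ⊗ (1_ y ⊗ h)) = (1_ (tns x y) ⊗ h) ∘ α' x y z.
Proof. rewrite a'N t11. reflexivity. Qed.
Lemma lN x y (f : hom C x y) : λ y ∘ (1_ I ⊗ f) = f ∘ λ x.
Proof. apply lunit_nat; exact HC. Qed.
Lemma rN x y (f : hom C x y) : ρ y ∘ (f ⊗ 1_ I) = f ∘ ρ x.
Proof. apply runit_nat; exact HC. Qed.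
Lemma l'N x y (f : hom C x y) : λ' y ∘ f = (1_ I ⊗ f) ∘ λ' x.
Proof.
  apply (iso_mono _ _ (λ y) (λ' y)); first by apply l'l.
  rewrite !cA ll' il lN -cA ll' ir. reflexivity.
Qed.
Lemma r'N x y (f : hom C x y) : ρ' y ∘ f = (f ⊗ 1_ I) ∘ ρ' x.
Proof.
  apply (iso_mono _ _ (ρ y) (ρ' y)); first by apply r'r.
  rewrite !cA rr' il rN -cA rr' ir. reflexivity.
Qed.
Lemma bN x x' y y' (f : hom C x x') (g : hom C y y') : β x' y' ∘ (f ⊗ g) = (g ⊗ f) ∘ β x y.
Proof. apply braid_nat; exact HC. Qed.
Lemma bN1 x x' y (f : hom C x x') : β x' y ∘ (f ⊗ 1_ y) = (1_ y ⊗ f) ∘ β x y.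
Proof. apply bN. Qed.
Lemma bN2 x y y' (g : hom C y y') : β x y' ∘ (1_ x ⊗ g) = (g ⊗ 1_ x) ∘ β x y.
Proof. apply bN. Qed.

Lemma pent w x y z :
  α w x (tns y z) ∘ α (tns w x) y z
  = (1_ w ⊗ α x y z) ∘ (α w (tns x y) z ∘ (α w x y ⊗ 1_ z)).
Proof. apply pentagon; exact HC. Qed.
Lemma tri x y : (1_ x ⊗ λ y) ∘ α x I y = ρ x ⊗ 1_ y.
Proof. apply triangle; exact HC. Qed.
Lemma hex x y z :
  α y z x ∘ (β x (tns y z) ∘ α x y z)
  = (1_ y ⊗ β x z) ∘ (α y x z ∘ (β x y ⊗ 1_ z)).
Proof. apply hexagon; exact HC. Qed.

End S.

Ltac inst t := lazymatch type of t with
  | forall _, _ => inst open_constr:(t _)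
  | _ => t end.
Ltac arity t := lazymatch type of t with
  | forall _, _ => let n := arity open_constr:(t _) in constr:(S n)
  | _ => constr:(O) end.
Ltac app_holes e n := lazymatch n with
  | O => e
  | S ?m => app_holes uconstr:(e _) m end.
Ltac nrm := repeat rewrite <- cA.
Ltac rwt t := first [rewrite -> (tl t) | rewrite -> (tl3 t) | rewrite -> (tl4 t) | rewrite -> (tl5 t) | rewrite -> (tl6 t) | rewrite -> t]; nrm.
Ltac rwu u := first [rewrite -> (tl u) | rewrite -> (tl3 u) | rewrite -> (tl4 u) | rewrite -> (tl5 u) | rewrite -> (tl6 u) | rewrite -> u
  | rewrite (tl u) | rewrite (tl3 u) | rewrite (tl4 u) | rewrite (tl5 u) | rewrite (tl6 u) | rewrite u]; nrm.
Ltac rw1 e := let t := inst e in rwt t.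
Ltac rwb1 e := let t := inst e in rwt (eq_sym t).
Tactic Notation "rw" uconstr(e) :=
  let t := open_constr:(e) in let n := arity t in let u := app_holes e n in
  first [rwu u | rw1 t].
Tactic Notation "rwb" uconstr(e) :=
  let t := open_constr:(e) in let n := arity t in let u := app_holes e n in
  let u' := uconstr:(eq_sym u) in first [rwu u' | rwb1 t].



Ltac splr := repeat rewrite <- wr.
Ltac spll := repeat rewrite <- wl.
Ltac spl := splr; spll.

Section K.
Context {C : RawSMC} {HC : SMCLaws C}.
Notation "1_ x" := (idm C x) (at level 9, x at level 9).
Notation tns := (tens C).
Notation I := (tunit C).
Notation α := (assoc C).
Notation α' := (assoc_inv C).
Notation λ := (lunit C).
Notation λ' := (lunit_inv C).
Notation ρ := (runit C).
Notation ρ' := (runit_inv C).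
Notation β := (braid C).

Lemma faithL x y (f g : hom C x y) : 1_ I ⊗ f = 1_ I ⊗ g -> f = g.
Proof.
  intro E. apply (iso_epi _ _ (λ x) (λ' x)); first by apply ll'.
  rewrite -!lN E. reflexivity.
Qed.
Lemma faithR x y (f g : hom C x y) : f ⊗ 1_ I = g ⊗ 1_ I -> f = g.
Proof.
  intro E. apply (iso_epi _ _ (ρ x) (ρ' x)); first by apply rr'.
  rewrite -!rN E. reflexivity.
Qed.

Lemma K1 x y : λ (tns x y) ∘ α I x y = λ x ⊗ 1_ y.
Proof.
  apply faithL.
  apply (iso_epi _ _ (α I (tns I x) y ∘ (α I I x ⊗ 1_ y)) ((α' I I x ⊗ 1_ y) ∘ α' I (tns I x) y)).
  { nrm. rw wr. rw aa'. rw t11. rw il. rw aa'. reflexivity. }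
  rewrite -wl. nrm. rwb pent. rw tri. rwb aN2. rw wr. rw tri. rw aN1. nrm. reflexivity.
Qed.

Lemma K2 x y : (1_ x ⊗ ρ y) ∘ α x y I = ρ (tns x y).
Proof.
  apply faithR.
  apply (iso_mono _ _ (α x y I) (α' x y I)); first by apply a'a.
  rewrite -wr. nrm. rw aN2.
  rewrite -(tri (tns x y) I). rw aN3. rw pent. rw wl. rw tri. reflexivity.
Qed.

Lemma lIN x : λ (tns I x) = 1_ I ⊗ λ x.
Proof.
  apply (iso_mono _ _ (λ x) (λ' x)); first by apply l'l.
  rewrite lN. reflexivity.
Qed.
Lemma rIN x : ρ (tns x I) = ρ x ⊗ 1_ I.
Proof.
  apply (iso_mono _ _ (ρ x) (ρ' x)); first by apply r'r.
  rewrite rN. reflexivity.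
Qed.

Lemma K3 : λ I = ρ I.
Proof.
  apply faithR. rewrite -K1 -tri lIN. reflexivity.
Qed.


End K.

Section D.
Context {C : RawSMC} {HC : SMCLaws C}.
Notation "1_ x" := (idm C x) (at level 9, x at level 9).
Notation tns := (tens C).
Notation I := (tunit C).
Notation α := (assoc C).
Notation α' := (assoc_inv C).
Notation λ := (lunit C).
Notation λ' := (lunit_inv C).
Notation ρ := (runit C).
Notation ρ' := (runit_inv C).
Notation β := (braid C).

Lemma tri' x y : α x I y ∘ (ρ' x ⊗ 1_ y) = 1_ x ⊗ λ' y.
Proof.
  apply (iso_mono _ _ (1_ x ⊗ λ y) (1_ x ⊗ λ' y)).
  { rewrite wl l'l t11. reflexivity. }
  nrm. rw tri. rw wr. rw rr'. rewrite wl ll' !t11. reflexivity.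
Qed.
Lemma tri'' x y : α' x I y ∘ (1_ x ⊗ λ' y) = ρ' x ⊗ 1_ y.
Proof.
  rewrite -tri'. nrm. rw a'a. rw il. reflexivity.
Qed.

Lemma E x b (evb : hom C (tns b x) I) (coevb : hom C I (tns x b)) :
  is_dual C evb coevb -> forall a (g : hom C (tns a x) I),
  evb ∘ (dual_iso C g coevb ⊗ 1_ x) = g.
Proof.
  intros [Z1 Z2] a g. unfold dual_iso. rewrite -!wr. nrm.
  rewrite -K1. nrm. rwb lN. rw aN1. rw xch'. rewrite K3. rw rN.
  rewrite -K2. nrm. rw aN3. rw pent. rw wr. rw aa'. rw t11. rw il.
  rw aN2. rw tri'. rw wl. rw wl. rw wl. rw wl. rewrite Z1 t11 ir. reflexivity.
Qed.


Lemma UEq x b (evb : hom C (tns b x) I) (coevb : hom C I (tns x b)) :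
  is_dual C evb coevb -> forall a (h : hom C a b),
  dual_iso C (evb ∘ (h ⊗ 1_ x)) coevb = h.
Proof.
  intros [Z1 Z2] a h. unfold dual_iso. rewrite -!wr. nrm.
  rwb a'N1. rw xch. rwb r'N. rewrite !cA in Z2. rewrite !cA Z2 il. reflexivity.
Qed.

Lemma UE x b (evb : hom C (tns b x) I) (coevb : hom C I (tns x b)) :
  is_dual C evb coevb -> forall a (h k : hom C a b),
  evb ∘ (h ⊗ 1_ x) = evb ∘ (k ⊗ 1_ x) -> h = k.
Proof.
  intros D a h k E. rewrite -(UEq _ _ _ _ D _ h) -(UEq _ _ _ _ D _ k) E. reflexivity.
Qed.

Lemma UE' x b (evb : hom C (tns b x) I) (coevb : hom C I (tns x b)) :
  is_dual C evb coevb -> forall a (h : hom C a b) g,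
  evb ∘ (h ⊗ 1_ x) = g -> h = dual_iso C g coevb.
Proof.
  intros D a h g E. rewrite -(UEq _ _ _ _ D _ h) E. reflexivity.
Qed.

Lemma pentA w x y z :
  (1_ w ⊗ α' x y z) ∘ α w x (tns y z) = α w (tns x y) z ∘ ((α w x y ⊗ 1_ z) ∘ α' (tns w x) y z).
Proof.
  apply (iso_epi _ _ (α (tns w x) y z) (α' (tns w x) y z)); first by apply aa'.
  nrm. rw pent. rw wl. rw a'a. rw t11. rw il. rw a'a. rw ir. reflexivity.
Qed.

Lemma K1' x y : α' I x y ∘ λ' (tns x y) = λ' x ⊗ 1_ y.
Proof.
  apply (iso_mono _ _ (λ x ⊗ 1_ y) (λ' x ⊗ 1_ y)).
  { rewrite wr l'l t11. reflexivity. }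
  rewrite wr ll' t11 -K1. nrm. rw aa'. rw il. rewrite ll'. reflexivity.
Qed.
Lemma K2' x y : α x y I ∘ ρ' (tns x y) = 1_ x ⊗ ρ' y.
Proof.
  apply (iso_mono _ _ (1_ x ⊗ ρ y) (1_ x ⊗ ρ' y)).
  { rewrite wl r'r t11. reflexivity. }
  nrm. rw K2. rewrite rr' wl rr' t11. reflexivity.
Qed.
Lemma K3' : λ' I = ρ' I.
Proof.
  apply (iso_mono _ _ (λ I) (λ' I)); first by apply l'l.
  rewrite ll' K3 rr'. reflexivity.
Qed.

Lemma Cq x a b (eva : hom C (tns a x) I) (coeva : hom C I (tns x a)) (coevb : hom C I (tns x b)) :
  is_dual C eva coeva ->
  (1_ x ⊗ dual_iso C eva coevb) ∘ coeva = coevb.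
Proof.
  intros [Z1 Z2]. unfold dual_iso. rewrite -!wl. nrm.
  rewrite -K2'. nrm. rw r'N. rwb aN3. rw xch'. rewrite -K3'. rwb l'N.
  rw pentA. rwb aN2. rw tri. rw a'N1. rw K1'. rw wr. rw wr. rw wr. rw wr.
  rewrite !cA in Z1. rewrite !cA. rewrite -!cA. 
  transitivity ((ρ x ∘ ((1_ x ⊗ eva) ∘ (α x a x ∘ ((coeva ⊗ 1_ x) ∘ λ' x)))) ⊗ 1_ b ∘ coevb).
  { nrm. reflexivity. }
  rewrite -!cA in Z1. rewrite Z1 t11 il. reflexivity.
Qed.

End D.

Existing Class SMFunctorLaws.

Section F.
Context {C D : RawSMC} {HC : SMCLaws C} {HD : SMCLaws D}.
Context {F : FunData C D} {HF : SMFunctorLaws F}.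
Notation "1_ x" := (idm _ x) (at level 9, x at level 9).
Notation μ := (fmu F).
Notation μ' := (fmu_inv F).
Notation ε := (feps F).
Notation ε' := (feps_inv F).
Notation Fm := (fmap F).
Notation Fo := (fob F).

Lemma Fid x : Fm (1_ x) = 1_ (Fo x). Proof. apply fmap_id; exact HF. Qed.
Lemma Fc x y z (g : hom C y z) (f : hom C x y) : Fm g ∘ Fm f = Fm (g ∘ f).
Proof. symmetry; apply fmap_comp; exact HF. Qed.
Lemma mm' x y : μ x y ∘ μ' x y = 1_ _. Proof. apply (fmu_iso _ _ _ HF). Qed.
Lemma m'm x y : μ' x y ∘ μ x y = 1_ _. Proof. apply (fmu_iso _ _ _ HF). Qed.
Lemma ee' : ε ∘ ε' = 1_ _. Proof. apply (feps_iso _ _ _ HF). Qed.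
Lemma e'e : ε' ∘ ε = 1_ _. Proof. apply (feps_iso _ _ _ HF). Qed.
Lemma muN x x' y y' (f : hom C x x') (g : hom C y y') :
  μ x' y' ∘ (Fm f ⊗ Fm g) = Fm (f ⊗ g) ∘ μ x y.
Proof. symmetry; apply fmu_nat; exact HF. Qed.
Lemma muNl x y y' (g : hom C y y') : μ x y' ∘ (1_ (Fo x) ⊗ Fm g) = Fm (1_ x ⊗ g) ∘ μ x y.
Proof. rewrite -Fid muN. reflexivity. Qed.
Lemma muNr x x' y (f : hom C x x') : μ x' y ∘ (Fm f ⊗ 1_ (Fo y)) = Fm (f ⊗ 1_ y) ∘ μ x y.
Proof. rewrite -Fid muN. reflexivity. Qed.
Lemma mu'N x x' y y' (f : hom C x x') (g : hom C y y') :
  μ' x' y' ∘ Fm (f ⊗ g) = (Fm f ⊗ Fm g) ∘ μ' x y.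
Proof.
  apply (iso_mono _ _ (μ x' y') (μ' x' y')); first by apply m'm.
  nrm. rw mm'. rw il. rw muN. rw mm'. rw ir. reflexivity.
Qed.
Lemma mu'Nl x y y' (g : hom C y y') : μ' x y' ∘ Fm (1_ x ⊗ g) = (1_ (Fo x) ⊗ Fm g) ∘ μ' x y.
Proof. rewrite mu'N Fid. reflexivity. Qed.
Lemma mu'Nr x x' y (f : hom C x x') : μ' x' y ∘ Fm (f ⊗ 1_ y) = (Fm f ⊗ 1_ (Fo y)) ∘ μ' x y.
Proof. rewrite mu'N Fid. reflexivity. Qed.
Lemma Fa x y z :
  μ x (tens C y z) ∘ ((1_ (Fo x) ⊗ μ y z) ∘ assoc D (Fo x) (Fo y) (Fo z))
  = Fm (assoc C x y z) ∘ (μ (tens C x y) z ∘ (μ x y ⊗ 1_ (Fo z))).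
Proof. symmetry; apply fmu_assoc; exact HF. Qed.
Lemma Fl x : lunit D (Fo x) = Fm (lunit C x) ∘ (μ (tunit C) x ∘ (ε ⊗ 1_ (Fo x))).
Proof. symmetry; apply fmu_lunit; exact HF. Qed.
Lemma Fr x : runit D (Fo x) = Fm (runit C x) ∘ (μ x (tunit C) ∘ (1_ (Fo x) ⊗ ε)).
Proof. symmetry; apply fmu_runit; exact HF. Qed.
Lemma Fb x y : μ y x ∘ braid D (Fo x) (Fo y) = Fm (braid C x y) ∘ μ x y.
Proof. symmetry; apply fmu_braid; exact HF. Qed.
Lemma Fl' x : μ (tunit C) x ∘ ((ε ⊗ 1_ (Fo x)) ∘ lunit_inv D (Fo x)) = Fm (lunit_inv C x).
Proof.
  apply (iso_mono _ _ (Fm (lunit C x)) (Fm (lunit_inv C x))).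
  { rewrite Fc l'l Fid. reflexivity. }
  rewrite Fc ll' Fid. nrm. rwb Fl. rewrite ll'. reflexivity.
Qed.
Lemma Fr' x : μ x (tunit C) ∘ ((1_ (Fo x) ⊗ ε) ∘ runit_inv D (Fo x)) = Fm (runit_inv C x).
Proof.
  apply (iso_mono _ _ (Fm (runit C x)) (Fm (runit_inv C x))).
  { rewrite Fc r'r Fid. reflexivity. }
  rewrite Fc rr' Fid. nrm. rwb Fr. rewrite rr'. reflexivity.
Qed.
Lemma Fa' x y z :
  μ (tens C x y) z ∘ ((μ x y ⊗ 1_ (Fo z)) ∘ assoc_inv D (Fo x) (Fo y) (Fo z))
  = Fm (assoc_inv C x y z) ∘ (μ x (tens C y z) ∘ (1_ (Fo x) ⊗ μ y z)).
Proof.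
  apply (iso_mono _ _ (Fm (assoc C x y z)) (Fm (assoc_inv C x y z))).
  { rewrite Fc a'a Fid. reflexivity. }
  rw Fc. rewrite aa' Fid il. nrm. rwb Fa. rw aa'. rw ir. reflexivity.
Qed.
Lemma Fm1 x y : μ x y ∘ μ' x y = 1_ _. Proof. apply mm'. Qed.

Definition coevF x xd (coev : hom C (tunit C) (tens C x xd)) : hom D (tunit D) (tens D (Fo x) (Fo xd)) :=
  μ' x xd ∘ (Fm coev ∘ ε).
Definition evF' x xd (ev : hom C (tens C xd x) (tunit C)) : hom D (tens D (Fo xd) (Fo x)) (tunit D) :=
  ε' ∘ (Fm ev ∘ μ xd x).

Lemma F_dual x xd (ev : hom C (tens C xd x) (tunit C)) (coev : hom C (tunit C) (tens C x xd)) :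
  is_dual C ev coev -> is_dual D (evF' x xd ev) (coevF x xd coev).
Proof.
  intros [Z1 Z2]. unfold evF', coevF. split.
  - rewrite -!wl -!wr. nrm. rewrite Fr. nrm. rw wl. rw ee'. rw t11. rw il.
    rw muNl. rw Fa. rw wr. rw mm'. rw t11. rw il.
    rw muNr. rw Fl'. rw Fc. rw Fc. rw Fc. rw Fc. rewrite Z1 Fid. reflexivity.
  - rewrite -!wl -!wr. nrm. rewrite Fl. nrm. rw wr. rw ee'. rw t11. rw il.
    rw muNr. rw Fa'. rw wl. rw mm'. rw t11. rw il.
    rw muNl. rw Fr'. rw Fc. rw Fc. rw Fc. rw Fc. rewrite Z2 Fid. reflexivity.
Qed.

End F.

Section P.
Context {C : RawSMC} {HC : SMCLaws C}.
Notation "1_ x" := (idm C x) (at level 9, x at level 9).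
Notation tns := (tens C).
Notation I := (tunit C).
Notation α := (assoc C).
Notation α' := (assoc_inv C).
Notation λ := (lunit C).
Notation λ' := (lunit_inv C).
Notation ρ := (runit C).
Notation ρ' := (runit_inv C).
Notation β := (braid C).



Lemma hexB x y z :
  β x (tns y z) = α' y z x ∘ ((1_ y ⊗ β x z) ∘ (α y x z ∘ ((β x y ⊗ 1_ z) ∘ α' x y z))).
Proof.
  apply (iso_mono _ _ (α y z x) (α' y z x)); first by apply a'a.
  apply (iso_epi _ _ (α x y z) (α' x y z)); first by apply aa'.
  nrm. rw aa'. rw il. rw a'a. rw ir. rw hex. reflexivity.
Qed.

Lemma K4z x z : β x z ∘ (ρ x ⊗ 1_ z) = β x z ∘ ((λ x ∘ β x I) ⊗ 1_ z).
Proof.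
  rewrite -tri. nrm. rw bN2. rewrite -K1. nrm. rw hex. rw lN. rw K1. rw wr. reflexivity.
Qed.
Lemma K4 x : λ x ∘ β x I = ρ x.
Proof.
  apply faithR.
  apply (iso_mono _ _ (β x I) (β I x)); first by apply bb.
  rewrite K4z. reflexivity.
Qed.
Lemma K4' x : β x I ∘ ρ' x = λ' x.
Proof.
  apply (iso_mono _ _ (λ x) (λ' x)); first by apply l'l.
  nrm. rw K4. rewrite rr' ll'. reflexivity.
Qed.
Lemma K4b x : ρ x ∘ β I x = λ x.
Proof.
  rewrite -K4. nrm. rw bb. rw ir. reflexivity.
Qed.



Lemma K1'' x y : α I x y ∘ (λ' x ⊗ 1_ y) = λ' (tns x y).
Proof. rewrite -K1'. nrm. rw aa'. rw il. reflexivity. Qed.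
Lemma K2'' x y : (1_ x ⊗ ρ' y) = α x y I ∘ ρ' (tns x y).
Proof. rewrite K2'. reflexivity. Qed.

Definition etaL x a (coev : hom C I (tns x a)) n : hom C n (tns x (tns a n)) :=
  locked (α x a n ∘ ((coev ⊗ 1_ n) ∘ λ' n)).
Definition epsL x a (ev : hom C (tns a x) I) n : hom C (tns a (tns x n)) n :=
  locked (λ n ∘ ((ev ⊗ 1_ n) ∘ α' a x n)).

Lemma etaN x a coev n n' (f : hom C n n') :
  etaL x a coev n' ∘ f = (1_ x ⊗ (1_ a ⊗ f)) ∘ etaL x a coev n.
Proof. rewrite /etaL -!lock. nrm. rw l'N. rw xch. rw aN3. reflexivity. Qed.

Lemma epsN x a ev n n' (f : hom C n n') :
  epsL x a ev n' ∘ (1_ a ⊗ (1_ x ⊗ f)) = f ∘ epsL x a ev n.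
Proof. rewrite /epsL -!lock. nrm. rw a'N3. rw xch. rw lN. reflexivity. Qed.

Lemma EtaT x a coev n m :
  etaL x a coev (tns n m) = (1_ x ⊗ α a n m) ∘ (α x (tns a n) m ∘ (etaL x a coev n ⊗ 1_ m)).
Proof.
  rewrite /etaL -!lock. rewrite -!wr. nrm. rwb pent. rw aN1. rw K1''. reflexivity.
Qed.

Lemma EpsT x a ev n m :
  epsL x a ev n ⊗ 1_ m = epsL x a ev (tns n m) ∘ ((1_ a ⊗ α x n m) ∘ α a (tns x n) m).
Proof.
  rewrite /epsL -!lock. rewrite -!wr. nrm. rewrite -K1. nrm. rw aN1.
  apply f_equal. apply f_equal.
  apply (iso_mono _ _ (α a x (tns n m)) (α' a x (tns n m))); first by apply a'a.
  nrm. rw aa'. rw il. rw pent. rw wr. rw aa'. rw t11. rw ir. reflexivity.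
Qed.

Lemma TB x a ev coev : is_dual C ev coev -> forall n,
  (1_ x ⊗ epsL x a ev n) ∘ etaL x a coev (tns x n) = 1_ _.
Proof.
  intros [Z1 Z2] n. rewrite EtaT. rewrite /epsL -!lock. rewrite -!wl. nrm.
  rw (wl _ _ _ (α' _ _ _) (α _ _ _) _). rw a'a. rewrite t11. rw il. rwb aN2. rw tri. rewrite /etaL -!lock. rw wr. rw wr.
  rewrite Z1 t11. reflexivity.
Qed.

Lemma TA x a ev coev : is_dual C ev coev -> forall n,
  epsL x a ev (tns a n) ∘ (1_ a ⊗ etaL x a coev n) = 1_ _.
Proof.
  intros [Z1 Z2] n.
  assert (E : epsL x a ev (tns a n) = (epsL x a ev a ⊗ 1_ n) ∘ (α' a (tns x a) n ∘ (1_ a ⊗ α' x a n))).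
  { rewrite EpsT. nrm. rw aa'. rw il. rw wl. rw aa'. rewrite t11. rw ir. reflexivity. }
  rewrite E. rewrite /etaL -!lock. rewrite -!wl. nrm. rw wl. rw a'a. rewrite t11. rw il.
  rw a'N2. rw tri''. rewrite /epsL -!lock. rw wr. rw wr.
  rewrite Z2 t11. reflexivity.
Qed.


Lemma etaLd x a coev n : (coev ⊗ 1_ n) ∘ λ' n = α' x a n ∘ etaL x a coev n.
Proof. rewrite /etaL -!lock. nrm. rw a'a. rw il. reflexivity. Qed.
Lemma EtaT' x a coev n m :
  etaL x a coev n ⊗ 1_ m = α' x (tns a n) m ∘ ((1_ x ⊗ α' a n m) ∘ etaL x a coev (tns n m)).
Proof. rewrite EtaT. nrm. rw wl. rw a'a. rewrite t11. rw il. rw a'a. rw il. reflexivity. Qed.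
Lemma pentI w x y z :
  α (tns w x) y z ∘ ((α' w x y ⊗ 1_ z) ∘ (α' w (tns x y) z ∘ (1_ w ⊗ α' x y z))) = α' w x (tns y z).
Proof.
  apply (iso_mono _ _ (α w x (tns y z)) (α' w x (tns y z))); first by apply a'a.
  nrm. rw pent. rw wr. rw aa'. rewrite t11. rw il. rw aa'. rw il. rw wl. rw aa'. rewrite t11.
  rewrite aa'. reflexivity.
Qed.
Lemma K2i x y : ρ (tns x y) ∘ α' x y I = 1_ x ⊗ ρ y.
Proof. rewrite -K2. nrm. rw aa'. rw ir. reflexivity. Qed.

Lemma epsLd x a ev n : λ n ∘ (ev ⊗ 1_ n) = epsL x a ev n ∘ α a x n.
Proof. rewrite /epsL -lock. nrm. rw a'a. rw ir. reflexivity. Qed.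
Lemma wl2 x0 y0 z0 (f : hom C y0 z0) (g : hom C x0 y0) w v :
  (1_ w ⊗ (1_ v ⊗ f)) ∘ (1_ w ⊗ (1_ v ⊗ g)) = 1_ w ⊗ (1_ v ⊗ (f ∘ g)).
Proof. rewrite !wl. reflexivity. Qed.
Section Nested.
Variables (x y a b : ob C) (eva : hom C (tns a x) I) (coeva : hom C I (tns x a))
  (evb : hom C (tns b y) I) (coevb : hom C I (tns y b)).
Hypotheses (Da : is_dual C eva coeva) (Db : is_dual C evb coevb).

Definition ev_n : hom C (tns (tns b a) (tns x y)) I :=
  evb ∘ ((1_ b ⊗ epsL x a eva y) ∘ α b a (tns x y)).
Definition coev_n : hom C I (tns (tns x y) (tns b a)) :=
  α' x y (tns b a) ∘ ((1_ x ⊗ etaL y b coevb a) ∘ coeva).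

Lemma nested_Z1 : ρ (tns x y) ∘ ((1_ (tns x y) ⊗ ev_n) ∘ (α (tns x y) (tns b a) (tns x y)
   ∘ ((coev_n ⊗ 1_ (tns x y)) ∘ λ' (tns x y)))) = 1_ _.
Proof.
  unfold ev_n, coev_n. rewrite -!wl -!wr. nrm. rw etaLd. rwb a'N2. rw EtaT'. rewrite -!wl. nrm. rw pentI.
  rwb a'N3. rw (wl2 _ _ _ (α _ _ _) (α' _ _ _) _ _). rewrite aa' !t11. rw il.
  rwb a'N3. rw (wl _ _ _ (1_ _ ⊗ (1_ _ ⊗ _)) (etaL _ _ _ _) _). rwb etaN. rewrite -wl. nrm.
  rw (TB _ _ _ _ Da). rw ir. rwb a'N3. rw K2i. rw wl. rw wl.
  destruct Db as [Zb1 Zb2]. rewrite /etaL -lock. rewrite Zb1 t11. reflexivity.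
Qed.
Lemma nested_Z2 : λ (tns b a) ∘ ((ev_n ⊗ 1_ (tns b a)) ∘ (α' (tns b a) (tns x y) (tns b a)
   ∘ ((1_ (tns b a) ⊗ coev_n) ∘ ρ' (tns b a)))) = 1_ _.
Proof.
  unfold ev_n, coev_n. rewrite -!wl -!wr. nrm. rw epsLd. rw aN2. rewrite EpsT. rewrite -!wl. nrm.
  rwb pent. rw aa'. rw il. rwb aN3. rw (wl _ _ _ (α _ _ _) (α' _ _ _) _). rw aa'. rewrite t11. rw il.
  rw aN3. rw (wl _ _ _ (epsL _ _ _ _) (1_ _ ⊗ (1_ _ ⊗ _)) _). rw epsN. rewrite -wl. nrm.
  rw (TA _ _ _ _ Db). rw il. rw aN3. rw K2'. rw wl. rw wl.
  destruct Da as [Za1 Za2]. rewrite /epsL -lock. nrm. rewrite Za2 t11. reflexivity.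
Qed.

Lemma nested_dual : is_dual C ev_n coev_n.
Proof. split; [apply nested_Z1 | apply nested_Z2]. Qed.
End Nested.
End P.

Section Par.
Context {C : RawSMC} {HC : SMCLaws C}.
Notation "1_ x" := (idm C x) (at level 9, x at level 9).
Notation tns := (tens C).
Notation I := (tunit C).
Notation α := (assoc C).
Notation α' := (assoc_inv C).
Notation λ := (lunit C).
Notation λ' := (lunit_inv C).
Notation ρ := (runit C).
Notation ρ' := (runit_inv C).
Notation β := (braid C).

Lemma transport X B B' (ev : hom C (tns B X) I) (coev : hom C I (tns X B)) (s : hom C B' B) (s' : hom C B B') :
  is_dual C ev coev -> s ∘ s' = 1_ B -> s' ∘ s = 1_ B' ->
  is_dual C (ev ∘ (s ⊗ 1_ X)) ((1_ X ⊗ s') ∘ coev).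
Proof.
  intros [Z1 Z2] E1 E2. split.
  - rewrite -!wl -!wr. nrm. rw aN2. rw (wl _ _ _ (_ ⊗ 1_ _) (_ ⊗ 1_ _) _). rw wr. rw E1.
    rewrite !t11. rw il. exact Z1.
  - rewrite -!wl -!wr. nrm. rwb a'N1. rw xch. rw a'N3. rw xch. rw lN. rw xch. rwb r'N. rw Z2. rw il. exact E2.
Qed.

Lemma hexC x y z :
  α y x z ∘ ((β x y ⊗ 1_ z) ∘ α' x y z) = (1_ y ⊗ β z x) ∘ (α y z x ∘ β x (tns y z)).
Proof.
  rewrite hexB. nrm. rw aa'. rw il. rw wl. rw bb. rewrite t11. rw il. reflexivity.
Qed.

Lemma hexE x y z :
  β y (tns x z) ∘ (α y x z ∘ ((β x y ⊗ 1_ z) ∘ α' x y z)) = α' x z y ∘ (1_ x ⊗ β y z).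
Proof.
  rewrite hexB. nrm. rw a'a. rw il. rw wr. rw bb. rewrite t11. rw il. rw aa'. rw ir. reflexivity.
Qed.

Lemma LocC y a b (coevb : hom C I (tns y b)) :
  α y a b ∘ ((β a y ⊗ 1_ b) ∘ (α' a y b ∘ ((1_ a ⊗ coevb) ∘ ρ' a)))
  = (1_ y ⊗ β b a) ∘ etaL y b coevb a.
Proof.
  rw hexC. rw bN2. rw K4'. rewrite /etaL -lock. reflexivity.
Qed.

Lemma LocE x a b (eva : hom C (tns a x) I) :
  λ b ∘ ((eva ⊗ 1_ b) ∘ (α' a x b ∘ (1_ a ⊗ β b x)))
  = ρ b ∘ ((1_ b ⊗ eva) ∘ (α b a x ∘ ((β a b ⊗ 1_ x) ∘ α' a b x))).
Proof.
  rewrite -K4. nrm. rw bN2. rw hexE. reflexivity.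
Qed.


Lemma pentJ w x y z :
  α' (tns w x) y z ∘ (α' w x (tns y z) ∘ (1_ w ⊗ α x y z)) = (α' w x y ⊗ 1_ z) ∘ α' w (tns x y) z.
Proof.
  apply (iso_mono _ _ (α (tns w x) y z) (α' (tns w x) y z)); first by apply a'a.
  apply (iso_mono _ _ (α w x (tns y z)) (α' w x (tns y z))); first by apply a'a.
  nrm. rw aa'. rw il. rw aa'. rw il. rw pent. rw wr. rw aa'. rewrite t11. rw il. rw aa'. rw ir.
  reflexivity.
Qed.
Lemma pentK w x y z :
  (α' w x y ⊗ 1_ z) ∘ (α' w (tns x y) z ∘ ((1_ w ⊗ α' x y z) ∘ α w x (tns y z))) = α' (tns w x) y z.
Proof.
  apply (iso_mono _ _ (α (tns w x) y z) (α' (tns w x) y z)); first by apply a'a.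
  apply (iso_mono _ _ (α w x (tns y z)) (α' w x (tns y z))); first by apply a'a.
  nrm. rw aa'. rw ir. rw pent. rw wr. rw aa'. rewrite t11. rw il. rw aa'. rw il. rw wl. rw aa'.
  rewrite t11. rw il. reflexivity.
Qed.
Lemma K1i x y : λ (tns x y) = (λ x ⊗ 1_ y) ∘ α' I x y.
Proof. rewrite -K1. nrm. rw aa'. rw ir. reflexivity. Qed.

Lemma Rcoev x y a b (coeva : hom C I (tns x a)) (coevb : hom C I (tns y b)) :
  shuffle C x a y b ∘ ((coeva ⊗ coevb) ∘ λ' I)
  = (1_ (tns x y) ⊗ β b a) ∘ coev_n x y a b coeva coevb.
Proof.
  unfold shuffle, coev_n. rewrite (tsplit' _ _ _ _ coeva coevb). nrm. rw aN3. rewrite K3'.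
  rwb r'N. rw K2'. rwb a'N3. repeat rw wl. rewrite -LocC. reflexivity.
Qed.

Lemma Rev x y a b (eva : hom C (tns a x) I) (evb : hom C (tns b y) I) :
  λ I ∘ ((eva ⊗ evb) ∘ shuffle C a b x y)
  = ev_n x y a b eva evb ∘ (β a b ⊗ 1_ (tns x y)).
Proof.
  unfold shuffle, ev_n. rewrite (tsplit' _ _ _ _ eva evb). nrm. rw lN. rewrite K1i. nrm.
  rw a'N1. rw pentJ. rw a'N2. rw wr. rw wr. rw wr. rewrite LocE. rewrite -!wr. nrm.
  rw pentK. rwb a'N1. rewrite -tri. nrm. rw aN2. rwb pentA.
  rewrite /epsL -lock. rewrite -!wl. nrm. reflexivity.
Qed.

Lemma par_dual x y a b (eva : hom C (tns a x) I) (coeva : hom C I (tns x a))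
  (evb : hom C (tns b y) I) (coevb : hom C I (tns y b)) :
  is_dual C eva coeva -> is_dual C evb coevb ->
  is_dual C (λ I ∘ ((eva ⊗ evb) ∘ shuffle C a b x y)) (shuffle C x a y b ∘ ((coeva ⊗ coevb) ∘ λ' I)).
Proof.
  intros Da Db. rewrite Rev Rcoev. apply transport.
  - apply nested_dual; assumption.
  - apply bb.
  - apply bb.
Qed.

End Par.

Section FS.
Context {C D : RawSMC} {HC : SMCLaws C} {HD : SMCLaws D}.
Context {F : FunData C D} {HF : SMFunctorLaws F}.
Notation "1_ x" := (idm _ x) (at level 9, x at level 9).
Notation μ := (fmu F).
Notation μ' := (fmu_inv F).
Notation ε := (feps F).
Notation ε' := (feps_inv F).
Notation Fm := (fmap F).
Notation Fo := (fob F).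

Lemma Fsh a b c d :
  Fm (shuffle C a b c d) ∘ (μ (tens C a b) (tens C c d) ∘ (μ a b ⊗ μ c d))
  = μ (tens C a c) (tens C b d) ∘ ((μ a c ⊗ μ b d) ∘ shuffle D (Fo a) (Fo b) (Fo c) (Fo d)).
Proof.
  unfold shuffle. repeat rewrite <- Fc. nrm.
  rewrite (tsplit _ _ _ _ (μ a b) (μ c d)). nrm.
  rwb Fa. rw aN3. rwb muNl. rw wl. rw wl. rwb Fa'. spll. nrm.
  rwb muNl. rw wl. rwb muNr. rw wl. rw wr. rwb Fb. splr. spll. nrm.
  rwb muNl. rw wl. rw wl. rwb Fa. spll. nrm.
  rwb Fa'. rw a'N3. rwb (tsplit _ _ _ _ (μ a c) (μ b d)). reflexivity.
Qed.

Lemma FlI : ε' ∘ (Fm (lunit C (tunit C)) ∘ μ (tunit C) (tunit C)) = lunit D (tunit D) ∘ (ε' ⊗ ε').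
Proof.
  apply (iso_epi _ _ (ε ⊗ 1_ (Fo (tunit C))) (ε' ⊗ 1_ (Fo (tunit C)))).
  { rewrite wr ee' t11. reflexivity. }
  nrm. rwb Fl. rw tc. rewrite e'e ir. rw lN. reflexivity.
Qed.

Lemma FevPar x xd y yd (evx : hom C (tens C xd x) (tunit C)) (evy : hom C (tens C yd y) (tunit C)) :
  lunit D (tunit D) ∘ ((evF' x xd evx ⊗ evF' y yd evy) ∘ shuffle D (Fo xd) (Fo yd) (Fo x) (Fo y))
  = ε' ∘ (Fm (lunit C (tunit C) ∘ ((evx ⊗ evy) ∘ shuffle C xd yd x y))
          ∘ (μ (tens C xd yd) (tens C x y) ∘ (μ xd yd ⊗ μ x y))).
Proof.
  repeat rewrite <- Fc. nrm. rw Fsh. rwb muN. rw FlI. rw tc. rw tc. unfold evF'. nrm. reflexivity.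
Qed.
Lemma FevPar' x xd y yd (evx : hom C (tens C xd x) (tunit C)) (evy : hom C (tens C yd y) (tunit C)) :
  lunit D (tunit D) ∘ (((ε' ∘ (Fm evx ∘ μ xd x)) ⊗ (ε' ∘ (Fm evy ∘ μ yd y))) ∘ shuffle D (Fo xd) (Fo yd) (Fo x) (Fo y))
  = ε' ∘ (Fm (lunit C (tunit C) ∘ ((evx ⊗ evy) ∘ shuffle C xd yd x y))
          ∘ (μ (tens C xd yd) (tens C x y) ∘ (μ xd yd ⊗ μ x y))).
Proof. exact (FevPar x xd y yd evx evy). Qed.
End FS.

Section SH.
Context {C : RawSMC} {HC : SMCLaws C}.
Notation "1_ x" := (idm C x) (at level 9, x at level 9).
Lemma shN1 a a' b b' c d (f : hom C a a') (g : hom C b b') :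
  shuffle C a' b' c d ∘ ((f ⊗ g) ⊗ 1_ (tens C c d))
  = ((f ⊗ 1_ c) ⊗ (g ⊗ 1_ d)) ∘ shuffle C a b c d.
Proof.
  unfold shuffle. nrm. rewrite -t11. rw aN. rewrite t11. rewrite (tsplit _ _ _ _ f). nrm.
  rw xch'. rw xch'. rw xch'. rw a'N1.
  rw (wl _ _ _ (assoc_inv C _ _ _) (_ ⊗ 1_ _) _). rw a'N1. spll. nrm.
  rw (wl _ _ _ (braid C _ _ ⊗ 1_ _) (_ ⊗ 1_ _) _). rw wr. rw bN1. splr. spll. nrm.
  rw (wl _ _ _ (assoc C _ _ _) (_ ⊗ 1_ _) _). rw aN2. spll. nrm.
  rw a'N3. rw tc. rewrite ir il. reflexivity.
Qed.
End SH.

Section Contra.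
Context {C : RawSMC} {HC : SMCLaws C}.
Context {d : FunData C (op C)} {Hd : SMFunctorLaws d}.
Notation "1_ x" := (idm C x) (at level 9, x at level 9).
Notation "'dd' f" := (fmap d f : hom C _ _) (at level 9, f at level 9).
Notation "'μd' x y" := (fmu d x y : hom C (fob d (tens C x y)) (tens C (fob d x) (fob d y))) (at level 9, x at level 9, y at level 9).
Notation "'μd'' x y" := (fmu_inv d x y : hom C (tens C (fob d x) (fob d y)) (fob d (tens C x y))) (at level 9, x at level 9, y at level 9).

Lemma dId x : fmap d (1_ x) = 1_ (fob d x). Proof. apply (fmap_id _ _ _ Hd). Qed.
Lemma dc x y z (f : hom C x y) (g : hom C y z) :
  dd f ∘ dd g = dd (g ∘ f).
Proof. rewrite (fmap_comp _ _ _ Hd). reflexivity. Qed.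
Lemma dmm' x y : μd x y ∘ μd' x y = 1_ _.
Proof. apply (fmu_iso _ _ _ Hd). Qed.
Lemma dm'm x y : μd' x y ∘ μd x y = 1_ _.
Proof. apply (fmu_iso _ _ _ Hd). Qed.
Lemma dmuN x x' y y' (f : hom C x x') (g : hom C y y') :
  μd x y ∘ dd (f ⊗ g) = (dd f ⊗ dd g) ∘ μd x' y'.
Proof. apply (fmu_nat _ _ _ Hd). Qed.
Lemma dmu'N x x' y y' (f : hom C x x') (g : hom C y y') :
  dd (f ⊗ g) ∘ μd' x' y' = μd' x y ∘ (dd f ⊗ dd g).
Proof.
  apply (iso_mono _ _ (μd x y) (μd' x y)); first by apply dm'm.
  nrm. rw dmuN. rw dmm'. rw dmm'. rewrite ir il. reflexivity.
Qed.
Lemma dmu'Nl x y y' (g : hom C y y') :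
  μd' x y ∘ (1_ (fob d x) ⊗ dd g) = dd (1_ x ⊗ g) ∘ μd' x y'.
Proof. rewrite dmu'N dId. reflexivity. Qed.
End Contra.

Section Psi.
Context {C : RawSMC} {HC : SMCLaws C}.
Lemma psiE (A : AntiInv C) (Dl : Duals C) (HD : DualsLaws Dl) y :
  dev Dl (fob (ai_d A) y) ∘ (dual_iso C (ev_d A Dl y) (dcoev Dl (fob (ai_d A) y)) ⊗ idm C (fob (ai_d A) y))
  = ev_d A Dl y.
Proof. apply E. apply HD. Qed.
End Psi.

Section Gen.
Context {C : RawSMC} {HC : SMCLaws C}.
Lemma dmE (Dl : Duals C) (HD : DualsLaws Dl) x y (f : hom C x y) :
  dev Dl x ∘ (dual_mor Dl f ⊗ idm C x) = dev Dl y ∘ (idm C (dob Dl y) ⊗ f).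
Proof. unfold dual_mor. apply E. apply HD. Qed.

Lemma unit_dual : is_dual C (lunit C (tunit C)) (lunit_inv C (tunit C)).
Proof.
  split.
  - rw tri. rw wr. rewrite K3' rr' t11 il rr'. reflexivity.
  - rw tri''. rw wr. rewrite -K3' ll' t11 il ll'. reflexivity.
Qed.
Lemma epsdE (Dl : Duals C) :
  lunit C (tunit C) ∘ (dual_iso C (dev Dl (tunit C)) (lunit_inv C (tunit C)) ⊗ idm C (tunit C))
  = dev Dl (tunit C).
Proof. apply E. apply unit_dual. Qed.
Lemma par_dualD (Dl : Duals C) (HD : DualsLaws Dl) x y : is_dual C (ev_par Dl x y) (coev_par Dl x y).
Proof. apply par_dual; apply HD. Qed.
Lemma mudE' (Dl : Duals C) (HD : DualsLaws Dl) x y :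
  lunit C (tunit C) ∘ ((dev Dl x ⊗ dev Dl y) ∘ (shuffle C (dob Dl x) (dob Dl y) x y
   ∘ (dual_iso C (dev Dl (tens C x y)) (coev_par Dl x y) ⊗ idm C (tens C x y))))
  = dev Dl (tens C x y).
Proof. pose proof (E _ _ _ _ (par_dualD Dl HD x y) _ (dev Dl (tens C x y))) as H. unfold ev_par in H. repeat rewrite <- cA in H. exact H. Qed.
Lemma mudE (Dl : Duals C) (HD : DualsLaws Dl) x y :
  ev_par Dl x y ∘ (dual_iso C (dev Dl (tens C x y)) (coev_par Dl x y) ⊗ idm C (tens C x y))
  = dev Dl (tens C x y).
Proof. apply E. apply par_dualD. exact HD. Qed.
End Gen.

Section Main.
Context (C1 C2 : RawSMC) (HC1 : SMCLaws C1) (HC2 : SMCLaws C2)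
  (A1 : AntiInv C1) (A2 : AntiInv C2)
  (HA1 : AntiInvLaws A1) (HA2 : AntiInvLaws A2)
  (D1 : Duals C1) (D2 : Duals C2)
  (HD1 : DualsLaws D1) (HD2 : DualsLaws D2)
  (F : AIFun A1 A2) (HF : AIFunLaws F).
Notation Fn := (aif_F F).
Local Instance HFn : SMFunctorLaws Fn := aif_sm _ _ _ _ _ HF.
Notation "'ζ' x" := (zeta D1 D2 Fn x : hom C2 (fob Fn (dob D1 x)) (dob D2 (fob Fn x))) (at level 9, x at level 9).

Lemma zE x : dev D2 (fob Fn x) ∘ (ζ x ⊗ idm C2 (fob Fn x)) = evF D1 Fn x.
Proof. unfold zeta. apply E. apply HD2. Qed.

Lemma Fdual x : is_dual C2 (evF D1 Fn x) (coevF x (dob D1 x) (dcoev D1 x)).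
Proof. apply (F_dual x (dob D1 x) (dev D1 x) (dcoev D1 x)). apply HD1. Qed.

Lemma zeta_nat x y (f : hom C1 x y) :
  dual_mor D2 (fmap Fn f) ∘ ζ y = ζ x ∘ fmap Fn (dual_mor D1 f).
Proof.
  apply (UE _ _ _ _ (HD2 (fob Fn x))).
  splr. nrm. rw (dmE _ HD2). rw xch'. rw zE. unfold evF. nrm. rw muNl. rw Fc.
  rw zE. unfold evF. nrm. rw muNr. rw Fc. rewrite (dmE _ HD1). reflexivity.
Qed.


Definition zinv x : hom C2 (dob D2 (fob Fn x)) (fob Fn (dob D1 x)) :=
  dual_iso C2 (dev D2 (fob Fn x)) (coevF x (dob D1 x) (dcoev D1 x)).

Lemma zinvE x : evF D1 Fn x ∘ (zinv x ⊗ idm C2 (fob Fn x)) = dev D2 (fob Fn x).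
Proof. unfold zinv. apply E. apply Fdual. Qed.

Lemma z_zinv x : ζ x ∘ zinv x = idm C2 _.
Proof.
  apply (UE _ _ _ _ (HD2 (fob Fn x))). splr. nrm. rw zE. rewrite zinvE t11 ir. reflexivity.
Qed.
Lemma zinv_z x : zinv x ∘ ζ x = idm C2 _.
Proof.
  apply (UE _ _ _ _ (Fdual x)). splr. nrm. rw zinvE. rewrite zE t11 ir. reflexivity.
Qed.

Lemma zeta_eps :
  dual_iso C2 (dev D2 (tunit C2)) (lunit_inv C2 (tunit C2))
  ∘ dual_mor D2 (feps Fn) ∘ ζ (tunit C1) =
  feps_inv Fn ∘ fmap Fn (dual_iso C1 (dev D1 (tunit C1)) (lunit_inv C1 (tunit C1))).
Proof.
  apply (UE _ _ _ _ (@unit_dual C2 HC2)). splr. nrm.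
  rw epsdE. rw (dmE _ HD2). rw xch'. rw zE. unfold evF. nrm.
  rewrite K3. rw rN. rewrite Fr. nrm. rw xch'. rw muNr. rw Fc. rewrite -K3 epsdE. reflexivity.

Qed.

Lemma zeta_mu x y :
  dual_iso C2 (dev D2 (tens C2 (fob Fn x) (fob Fn y))) (coev_par D2 (fob Fn x) (fob Fn y))
  ∘ dual_mor D2 (fmu Fn x y) ∘ ζ (tens C1 x y) =
  (ζ x ⊗ ζ y) ∘ (fmu_inv Fn (dob D1 x) (dob D1 y)
     ∘ fmap Fn (dual_iso C1 (dev D1 (tens C1 x y)) (coev_par D1 x y))).
Proof.
  apply (UE _ _ _ _ (par_dualD D2 HD2 (fob Fn x) (fob Fn y))). nrm. splr. nrm.
  rw (mudE _ HD2). rw (dmE _ HD2). rw xch'. rw zE. unfold evF.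
  unfold ev_par. nrm. rw shN1. rw tc. rw tc. rewrite !zE. unfold evF. rw FevPar'.
  rewrite (tsplit' _ _ _ _ (fmu Fn (dob D1 x) (dob D1 y)) (fmu Fn x y)). nrm.
  rewrite il. rw wr. rw mm'. rw il. rw xch'. rw muNr. rw Fc. rewrite (mudE' _ HD1). reflexivity.
Qed.

Notation d1 := (ai_d A1).
Notation d2 := (ai_d A2).
Local Instance Hd1 : SMFunctorLaws d1 := ai_d_sm _ _ HA1.
Local Instance Hd2 : SMFunctorLaws d2 := ai_d_sm _ _ HA2.
Notation "'φ' x" := (aif_phi F x : hom C2 (fob Fn (fob d1 x)) (fob d2 (fob Fn x))) (at level 9, x at level 9).
Notation "'φ'' x" := (aif_phi_inv F x : hom C2 (fob d2 (fob Fn x)) (fob Fn (fob d1 x))) (at level 9, x at level 9).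
Notation "'dd1' f" := (fmap d1 f : hom C1 _ _) (at level 9, f at level 9).
Notation "'dd2' f" := (fmap d2 f : hom C2 _ _) (at level 9, f at level 9).
Notation "'μd1' x y" := (fmu d1 x y : hom C1 (fob d1 (tens C1 x y)) (tens C1 (fob d1 x) (fob d1 y))) (at level 9, x at level 9, y at level 9).
Notation "'μd1'' x y" := (fmu_inv d1 x y : hom C1 (tens C1 (fob d1 x) (fob d1 y)) (fob d1 (tens C1 x y))) (at level 9, x at level 9, y at level 9).
Notation "'μd2' x y" := (fmu d2 x y : hom C2 (fob d2 (tens C2 x y)) (tens C2 (fob d2 x) (fob d2 y))) (at level 9, x at level 9, y at level 9).
Notation "'μd2'' x y" := (fmu_inv d2 x y : hom C2 (tens C2 (fob d2 x) (fob d2 y)) (fob d2 (tens C2 x y))) (at level 9, x at level 9, y at level 9).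

Lemma p'p x : φ' x ∘ φ x = idm C2 _. Proof. apply (aif_phi_inv_iso _ _ _ _ _ HF). Qed.
Lemma pp' x : φ x ∘ φ' x = idm C2 _. Proof. apply (aif_phi_inv_iso _ _ _ _ _ HF). Qed.
Lemma phiN x y (f : hom C1 x y) : dd2 (fmap Fn f) ∘ φ y = φ x ∘ fmap Fn (dd1 f).
Proof. exact (nat_natural _ _ _ _ _ (aif_phi_mon _ _ _ _ _ HF) x y f). Qed.
Lemma phiMu x y :
  μd2 (fob Fn x) (fob Fn y) ∘ (dd2 (fmu Fn x y) ∘ φ (tens C1 x y))
  = (φ x ⊗ φ y) ∘ (fmu_inv Fn (fob d1 x) (fob d1 y) ∘ fmap Fn (μd1 x y)).
Proof. pose proof (nat_mu _ _ _ _ _ (aif_phi_mon _ _ _ _ _ HF) x y) as H. cbn in H. repeat rewrite <- cA in H. nrm. exact H. Qed.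
Lemma phiEps :
  (feps d2 : hom C2 _ _) ∘ (dd2 (feps Fn) ∘ φ (tunit C1)) = feps_inv Fn ∘ fmap Fn (feps d1 : hom C1 _ _).
Proof. pose proof (nat_eps _ _ _ _ _ (aif_phi_mon _ _ _ _ _ HF)) as H. cbn in H. repeat rewrite <- cA in H. nrm. exact H. Qed.

Lemma phiN' x y (f : hom C1 x y) : fmap Fn (dd1 f) ∘ φ' y = φ' x ∘ dd2 (fmap Fn f).
Proof.
  apply (iso_mono _ _ (φ x) (φ' x)); first by apply p'p.
  nrm. rwb phiN. rw pp'. rw pp'. rewrite ir il. reflexivity.
Qed.
Lemma aux_mu x y :
  fmap Fn (μd1 x y) ∘ φ' (tens C1 x y)
  = fmu Fn (fob d1 x) (fob d1 y) ∘ ((φ' x ⊗ φ' y) ∘ (μd2 (fob Fn x) (fob Fn y) ∘ dd2 (fmu Fn x y))).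
Proof.
  apply (iso_mono _ _ ((φ x ⊗ φ y) ∘ fmu_inv Fn (fob d1 x) (fob d1 y))
                      (fmu Fn (fob d1 x) (fob d1 y) ∘ (φ' x ⊗ φ' y))).
  { nrm. rw tc. rewrite !p'p t11. rw il. apply mm'. }
  nrm. rwb phiMu. rw pp'. rw ir. rw m'm. rw il. rw tc. rewrite !pp' t11 il. reflexivity.
Qed.
Lemma phiMu' x y :
  fmap Fn (μd1' x y) ∘ (fmu Fn (fob d1 x) (fob d1 y) ∘ (φ' x ⊗ φ' y))
  = φ' (tens C1 x y) ∘ (dd2 (fmu_inv Fn x y) ∘ μd2' (fob Fn x) (fob Fn y)).
Proof.
  apply (iso_mono _ _ (fmap Fn (μd1 x y)) (fmap Fn (μd1' x y))).
  { rewrite Fc dm'm Fid. reflexivity. }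
  nrm. rw Fc. rewrite dmm' Fid il. rw aux_mu. rw (dc (d:=d2)). rw m'm. rewrite dId. rw il. rw dmm'.
  rewrite ir. reflexivity.
Qed.
Lemma phiEps' :
  feps_inv Fn ∘ (fmap Fn (feps d1 : hom C1 _ _) ∘ φ' (tunit C1)) = (feps d2 : hom C2 _ _) ∘ dd2 (feps Fn).
Proof. rwb phiEps. rw pp'. rewrite ir. reflexivity. Qed.
Lemma phiT x :
  idm C2 (fob Fn (fob d1 x)) ⊗ φ' (dob D1 x) = (φ' x ⊗ φ' (dob D1 x)) ∘ (φ x ⊗ idm C2 (fob d2 (fob Fn (dob D1 x)))).
Proof. rewrite tc p'p ir. reflexivity. Qed.
Lemma zC x :
  (idm C2 (fob Fn x) ⊗ ζ x) ∘ (fmu_inv Fn x (dob D1 x) ∘ (fmap Fn (dcoev D1 x) ∘ feps Fn))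
  = dcoev D2 (fob Fn x).
Proof. exact (Cq _ _ _ _ _ _ (Fdual x)). Qed.

Lemma zeta_coh x :
  dual_mor D2 (aif_phi F x)
  ∘ dual_iso C2 (ev_d A2 D2 (fob Fn x)) (dcoev D2 (fob d2 (fob Fn x))) =
  ζ (fob d1 x)
  ∘ (fmap Fn (dual_iso C1 (ev_d A1 D1 x) (dcoev D1 (fob d1 x))) ∘ φ' (dob D1 x))
  ∘ dd2 (ζ x).
Proof.
  apply (UE _ _ _ _ (HD2 (fob Fn (fob d1 x)))). nrm. splr. nrm.
  rw (dmE _ HD2). rw xch'. cbn [fcomp fob]. rw (psiE _ _ HD2). unfold ev_d at 1. nrm. rewrite (bN2 (HC:=HC2)).
  rw zE. unfold evF. nrm. rw muNr. rw Fc. rewrite (psiE _ _ HD1). unfold ev_d.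
  repeat rewrite <- Fc. nrm. rwb (Fb (F:=Fn)). rw bN1. rw bN1.
  rewrite (phiT x). nrm. rw phiMu'. rw phiN'. rw phiEps'. rw xch. rw (dmu'Nl (d:=d2)).
  rw (dc (d:=d2)). rw (dc (d:=d2)). rw (dc (d:=d2)). rw zC. reflexivity.
Qed.

End Main.

Theorem mainTheorem13 (C1 C2 : RawSMC)
  (HC1 : SMCLaws C1) (HC2 : SMCLaws C2)
  (A1 : AntiInv C1) (A2 : AntiInv C2)
  (HA1 : AntiInvLaws A1) (HA2 : AntiInvLaws A2)
  (D1 : Duals C1) (D2 : Duals C2)
  (HD1 : DualsLaws D1) (HD2 : DualsLaws D2)
  (F : AIFun A1 A2) (HF : AIFunLaws F) :
  AINatLaws (aifcomp (dualAIF A2 D2) F) (aifcomp (fopAIF F) (dualAIF A1 D1))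
            (zeta D1 D2 (aif_F F)).
Proof.
  constructor; [constructor|].
  - intros x y f. cbn. eapply zeta_nat; eassumption.
  - intros x y. cbn. eapply zeta_mu; eassumption.
  - cbn. eapply zeta_eps; eassumption.
  - intros x. exists (zinv C1 C2 A1 A2 D1 D2 F x). split; cbn.
    + eapply z_zinv; eassumption.
    + eapply zinv_z; eassumption.
  - intros x. cbn. eapply zeta_coh; eassumption.
Qed.
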